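(* Let $\pi$ be a permutation of $\{1,\dots,n\}$. A set $M$ of edges of $G(\pi)$ is an induced matching if and only if the corresponding set of matches can be ordered as a chain $e_1<e_2<\dots<e_k$. Consequently, the size of a maximum induced matching of $G(\pi)$ equals the maximum length of a chain of matches.
   Context: $\pi^{-1}(i)$ denotes the position of $i$ in $\pi$. The permutation graph $G(\pi)$ has vertex set $\{1,\dots,n\}$ and $uv$ is an edge iff $(u-v)(\pi^{-1}(u)-\pi^{-1}(v))<0$. A match is an ordered pair $(x,y)$ with $1\le x<y\le n$ and $\pi^{-1}(x)>\pi^{-1}(y)$; matches correspond bijectively to edges $xy$ of $G(\pi)$. For matches $e=(x,y)$ and $e'=(x',y')$ we write $e<e'$ if $y<x'$ and $\pi^{-1}(x)<\pi^{-1}(y')$. A chain is a sequence of matches $e_1,\dots,e_k$ with $e_i<e_{i+1}$ for all $1\le i<k$; its length is $k$. An induced matching of a graph $G=(V,E)$ is a set $M\subseteq E$ such that for any two distinct edges $u_1v_1,u_2v_2\in M$, none of $u_1u_2,u_1v_2,v_1u_2,v_1v_2$ is in $E$. *)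

(* Defs.v *)
(* Vertices {1,...,n} are represented by 'I_n = {0,...,n-1}. *)
From mathcomp Require Import all_boot all_fingroup.
Set Implicit Arguments. Unset Strict Implicit. Unset Printing Implicit Defensive.
Local Open Scope group_scope.

Section PermGraph.
Variable n : nat.
Variable pi : 'S_n.  (* pi maps positions to values *)

Definition pos (i : 'I_n) : nat := (pi^-1 i : 'I_n).

(* edge relation of G(pi): (u - v)(pi^-1 u - pi^-1 v) < 0 *)
Definition padj (u v : 'I_n) : bool :=
  ((u < v)%N && (pos v < pos u)%N) || ((v < u)%N && (pos u < pos v)%N).

Definition pedges : {set {set 'I_n}} :=
  [set [set u; v] | u in 'I_n, v in 'I_n & padj u v].

Definition is_match (e : 'I_n * 'I_n) : bool :=
  ((e.1 < e.2)%N && (pos e.2 < pos e.1)%N).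

Definition edge_of (e : 'I_n * 'I_n) : {set 'I_n} := [set e.1; e.2].

Definition match_lt (e e' : 'I_n * 'I_n) : bool :=
  ((e.2 < e'.1)%N && (pos e.1 < pos e'.2)%N).

Definition is_chain (s : seq ('I_n * 'I_n)) : bool :=
  all is_match s && sorted match_lt s.

Definition matches_of (M : {set {set 'I_n}}) : {set 'I_n * 'I_n} :=
  [set e | is_match e & edge_of e \in M].

End PermGraph.

Definition induced_matching (T : finType) (adj : rel T)
    (E M : {set {set T}}) : Prop :=
  M \subset E /\
  forall u1 v1 u2 v2 : T,
    [set u1; v1] \in M -> [set u2; v2] \in M -> [set u1; v1] != [set u2; v2] ->
    ~~ adj u1 u2 /\ ~~ adj u1 v2 /\ ~~ adj v1 u2 /\ ~~ adj v1 v2.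

(* Main.v *)
Require Import Defs.
From mathcomp Require Import all_boot all_fingroup.
From mathcomp Require Import zify_ssreflect.
Set Implicit Arguments. Unset Strict Implicit. Unset Printing Implicit Defensive.

Section Aux.
Variable n : nat.
Variable pi : 'S_n.

Lemma lt_trans_m : {in is_match pi & &, transitive (match_lt pi)}.
Proof.
move=> b a c; rewrite /is_match /match_lt.
move=> /andP[h1 h2] /andP[h3 h4] /andP[h5 h6] /andP[h7 h8] /andP[h9 h10].
apply/andP; split; lia.
Qed.

Lemma lt_irr_m e : is_match pi e -> match_lt pi e e = false.
Proof. rewrite /is_match /match_lt => /andP[h1 h2]; apply/negbTE/negP => /andP[h3 h4]; lia. Qed.

Lemma chain_pairwise s : is_chain pi s -> pairwise (match_lt pi) s.
Proof.
move=> /andP[hm hs]; by rewrite -(sorted_pairwise_in lt_trans_m hm).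
Qed.

Lemma chain_uniq s : is_chain pi s -> uniq s.
Proof.
move=> /andP[hm hs]; apply: (sorted_uniq_in _ _ hs).
- move=> b a c ha hb hc; apply: lt_trans_m; by apply: (allP hm).
- move=> e he; apply: lt_irr_m; exact: (allP hm).
Qed.

Lemma chain_cmp s a b : is_chain pi s -> a \in s -> b \in s -> a != b ->
  match_lt pi a b || match_lt pi b a.
Proof.
move=> /chain_pairwise; elim: s => //= x s IH /andP[hx hp].
rewrite !inE => /orP[/eqP->|ha] /orP[/eqP->|hb]; rewrite ?eqxx //.
- by move=> _; rewrite (allP hx).
- by move=> _; rewrite (allP hx) ?orbT.
- exact: IH.
Qed.

Lemma padjC u v : padj pi u v = padj pi v u.
Proof. by rewrite /padj orbC. Qed.

Lemma lt_noadj e e' a b : is_match pi e -> is_match pi e' -> match_lt pi e e' ->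
  a \in edge_of e -> b \in edge_of e' -> ~~ padj pi a b.
Proof.
rewrite /is_match /match_lt /edge_of /padj => /andP[h1 h2] /andP[h3 h4] /andP[h5 h6].
rewrite !inE => /orP[/eqP->|/eqP->] /orP[/eqP->|/eqP->]; apply/negP;
  move=> /orP[/andP[k1 k2]|/andP[k1 k2]]; lia.
Qed.

Lemma pos_eq (a b : 'I_n) : (a:nat) = b <-> pos pi a = pos pi b.
Proof. split; first by move=> /val_inj ->.
rewrite /pos => /val_inj /(congr1 pi); rewrite !permKV => -> //. Qed.

Definition mof (u v : 'I_n) : 'I_n * 'I_n := if (u < v)%N then (u, v) else (v, u).

Lemma mof_ok u v : padj pi u v -> is_match pi (mof u v) /\ edge_of (mof u v) = [set u; v].
Proof.
rewrite /padj /mof /is_match /edge_of => /orP[/andP[h1 h2]|/andP[h1 h2]].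
- by rewrite h1 /= h1 h2.
- have -> : (u < v)%N = false by apply/negbTE; rewrite -leqNgt ltnW.
  by rewrite /= h1 h2 setUC.
Qed.

Lemma edge_of_match E : E \in pedges pi -> exists e, is_match pi e /\ edge_of e = E.
Proof.
move=> /imset2P[u v _]; rewrite inE => huv ->.
exists (mof u v); exact: mof_ok.
Qed.

Lemma edge_of_inj e e' : is_match pi e -> is_match pi e' -> edge_of e = edge_of e' -> e = e'.
Proof.
case: e => x y; case: e' => x' y'; rewrite /is_match /edge_of /= => /andP[h1 _] /andP[h2 _] E.
have hx : x \in [set x'; y'] by rewrite -E !inE eqxx.
have hy : y \in [set x'; y'] by rewrite -E !inE eqxx orbT.
have hx' : x' \in [set x; y] by rewrite E !inE eqxx.
have hy' : y' \in [set x; y] by rewrite E !inE eqxx orbT.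
move: hx hy hx' hy'; rewrite !inE => /orP[/eqP a|/eqP a] /orP[/eqP b|/eqP b]
  /orP[/eqP c|/eqP c] /orP[/eqP d|/eqP d]; subst; try reflexivity; lia.
Qed.

Lemma match_edge_pedges e : is_match pi e -> edge_of e \in pedges pi.
Proof.
case: e => x y; rewrite /is_match /= => /andP[h1 h2].
apply/imset2P; exists x y => //; rewrite inE /padj h1 h2 //.
Qed.

Lemma backward (M : {set {set 'I_n}}) (s : seq ('I_n * 'I_n)) : M \subset pedges pi -> uniq s -> [set e in s] = matches_of pi M ->
  is_chain pi s -> induced_matching (padj pi) (pedges pi) M.
Proof.
move=> hM hu hset hc; split => // u1 v1 u2 v2 h1 h2 hne.
have [e1 [m1 E1]] := edge_of_match (subsetP hM _ h1).
have [e2 [m2 E2]] := edge_of_match (subsetP hM _ h2).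
have s1 : e1 \in s by rewrite -(in_set (fun e => e \in s)) hset inE m1 E1 h1.
have s2 : e2 \in s by rewrite -(in_set (fun e => e \in s)) hset inE m2 E2 h2.
have ne : e1 != e2 by apply/eqP => E; move: hne; rewrite -E1 -E2 E eqxx.
have hu1 : u1 \in edge_of e1 by rewrite E1 !inE eqxx.
have hv1 : v1 \in edge_of e1 by rewrite E1 !inE eqxx orbT.
have hu2 : u2 \in edge_of e2 by rewrite E2 !inE eqxx.
have hv2 : v2 \in edge_of e2 by rewrite E2 !inE eqxx orbT.
case/orP: (chain_cmp hc s1 s2 ne) => hl.
- by rewrite !(lt_noadj m1 m2 hl).
- by rewrite ![padj pi u1 _]padjC ![padj pi v1 _]padjC !(lt_noadj m2 m1 hl).
Qed.

Definition le_m (e e' : 'I_n * 'I_n) := (e == e') || match_lt pi e e'.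

Lemma sorted_le_lt s : uniq s -> sorted le_m s -> sorted (match_lt pi) s.
Proof.
case: s => // x s; elim: s x => // y s IH x /= /andP[hx hu] /andP[hxy hp].
apply/andP; split; last exact: IH.
move: hxy; rewrite /le_m.
have -> : (x == y) = false by apply/negbTE; apply: contra hx => /eqP ->; rewrite inE eqxx.
by [].
Qed.

Lemma forward (M : {set {set 'I_n}}) : M \subset pedges pi -> induced_matching (padj pi) (pedges pi) M ->
  exists s, [/\ uniq s, [set e in s] = matches_of pi M & is_chain pi s].
Proof.
move=> hM [_ hI].
set s := sort le_m (enum (matches_of pi M)).
have mem_s e : (e \in s) = (e \in matches_of pi M) by rewrite mem_sort mem_enum.
have hus : uniq s by rewrite sort_uniq enum_uniq.
exists s; split => //.
  by apply/setP => e; rewrite inE mem_s.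
apply/andP; split.
  by apply/allP => e; rewrite mem_s inE => /andP[].
apply: sorted_le_lt => //.
apply: (@sort_sorted_in _ (mem (matches_of pi M))); last by apply/allP => e; rewrite mem_enum.
move=> a b; rewrite !inE => /andP[ma ha] /andP[mb hb].
rewrite /le_m; case: (eqVneq a b) => [->|nab]; first by [].
rewrite /=.
have hne : edge_of a != edge_of b by apply: contra nab => /eqP/(edge_of_inj ma mb) ->.
have := hI _ _ _ _ ha hb hne.
move: ma mb; case: a {nab hne ha} => x1 y1; case: b {hb} => x2 y2.
rewrite /is_match /match_lt /padj /= => /andP[a1 a2] /andP[b1 b2] [n1 [n2 [n3 n4]]].
have ne (u v : 'I_n) : (u < v)%N -> pos pi u != pos pi v.
  by move=> uv; apply/negP => /eqP /(proj2 (pos_eq u v)) E; move: uv; rewrite E ltnn.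
case: (ltngtP x1 x2) => c.
- have d1 := ne _ _ c.
  have d2 : pos pi x1 != pos pi y2 by apply: ne; apply: ltn_trans c b1.
  case: (ltngtP y1 x2) => c2.
  + move: n1 n2; clear n3 n4; lia.
  + move: n1 n3; clear n2 n4; lia.
  + move/(proj1 (pos_eq _ _)): c2 => c2; move: n1; clear n2 n3 n4; lia.
- have d1 := ne _ _ c.
  have d2 : pos pi x2 != pos pi y1 by apply: ne; apply: ltn_trans c a1.
  case: (ltngtP y2 x1) => c2.
  + move: n1 n3; clear n2 n4; lia.
  + move: n1 n2; clear n3 n4; lia.
  + move/(proj1 (pos_eq _ _)): c2 => c2; move: n1; clear n2 n3 n4; lia.
- have c2 := proj1 (pos_eq _ _) c; move: n2; clear n1 n3 n4; lia.
Qed.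
End Aux.

Lemma chain_card (n : nat) (pi : 'S_n) (s : seq ('I_n * 'I_n)) :
  is_chain pi s -> #|[set e in s]| = size s.
Proof. move=> /chain_uniq hu; rewrite -(card_uniqP hu); apply: eq_card => x; by rewrite inE. Qed.

Lemma chain_im (n : nat) (pi : 'S_n) (s : seq ('I_n * 'I_n)) :
  is_chain pi s -> exists M, induced_matching (padj pi) (pedges pi) M /\ #|M| = size s.
Proof.
move=> hc; have hm := hc; move/andP: hm => [hm _].
set M := [set edge_of e | e in [set e in s]].
have hM : M \subset pedges pi.
  apply/subsetP => E /imsetP[e]; rewrite inE => he ->.
  exact: match_edge_pedges (allP hm _ he).
have hset : [set e in s] = matches_of pi M.
  apply/setP => e; rewrite !inE; apply/idP/idP.
    move=> he; rewrite (allP hm _ he) /=; apply/imsetP; exists e => //; by rewrite inE.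
  move=> /andP[me /imsetP[e']]; rewrite inE => he' E.
  by rewrite (edge_of_inj me (allP hm _ he') E).
exists M; split.
  exact: backward hM (chain_uniq hc) hset hc.
rewrite card_in_imset; first exact: chain_card hc.
move=> a b; rewrite !inE => ha hb; exact: edge_of_inj (allP hm _ ha) (allP hm _ hb).
Qed.

Theorem mainTheorem6 (n : nat) (pi : 'S_n) :
  (forall M : {set {set 'I_n}}, M \subset pedges pi ->
     (induced_matching (padj pi) (pedges pi) M <->
      exists s : seq ('I_n * 'I_n),
        [/\ uniq s, [set e in s] = matches_of pi M & is_chain pi s]))
  /\
  (exists k : nat,
     [/\ (exists M, induced_matching (padj pi) (pedges pi) M /\ #|M| = k),
         (forall M, induced_matching (padj pi) (pedges pi) M -> #|M| <= k),
         (exists s, is_chain pi s /\ size s = k) &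
         (forall s, is_chain pi s -> size s <= k)]).
Proof.
split.
  move=> M hM; split; first exact: forward.
  by case=> s [hu hs hc]; exact: backward hu hs hc.
pose P := fun k => [exists t : k.-tuple ('I_n * 'I_n), is_chain pi t].
have PP k : reflect (exists s, is_chain pi s /\ size s = k) (P k).
  apply: (iffP existsP) => [[t ht]|[s [hs hsz]]].
    by exists t; rewrite size_tuple.
  have hsz' : size s == k by rewrite hsz.
  by exists (Tuple hsz').
have exP : exists i, P i by exists 0; apply/PP; exists [::].
have ubP : forall i, P i -> i <= #|{: 'I_n * 'I_n}|.
  move=> i /PP[s [hs <-]]; rewrite -(chain_card hs) cardsE; exact: max_card.
case: (ex_maxnP exP ubP) => k Pk maxk.
have sizle s : is_chain pi s -> size s <= k.
  by move=> hs; apply: maxk; apply/PP; exists s.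
exists k; split.
- by case/PP: Pk => s [hs <-]; exact: chain_im.
- move=> M hI.
  have hM : M \subset pedges pi by case: hI.
  have [s [hu hset hc]] := forward hM hI.
  apply: leq_trans (sizle _ hc); rewrite -(chain_card hc) hset.
  apply: leq_trans (leq_imset_card (@edge_of n) _).
  apply: subset_leq_card; apply/subsetP => E hE.
  have [e [me Ee]] := edge_of_match (subsetP hM _ hE).
  by apply/imsetP; exists e => //; rewrite inE me Ee hE.
- exact/PP.
- exact: sizle.
Qed.
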